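(* There is an absolute constant $C$ such that the following holds. Let $D$ be a positive integer that is not a perfect square and let $1\le j\le 2p$. Then there is a sequence $(\tilde Q_k,V_k)$, $k=0,1,\dots,K$, of reduced forms $\tilde Q_k$ of determinant $D$ and integer $2\times2$ matrices $V_k$ such that: (i) $\tilde Q_0=\tilde I$ and $V_0$ is the identity matrix; (ii) each pair $(\tilde Q_{k+1},V_{k+1})$ is obtained from earlier pairs by a transformation of one of two types. Type I: $\tilde Q_{k+1}$ is the right neighbor of $\tilde Q_k$, $\tilde Q_{k+1}=S_{k+1}^t\tilde Q_kS_{k+1}$, $V_{k+1}=V_kS_{k+1}$, and $\log\|S_{k+1}\|\le\frac12\log D$. Type II: $\tilde Q_{k+1}=\tilde Q_{k_1}\circ\tilde Q_{k_2}$ via a bilinear matrix $B_{k+1}$ for some $0\le k_1,k_2\le k$, $V_{k+1}B_{k+1}=B_0(V_{k_1}\otimes V_{k_2})$, and $\log\|B_{k+1}\|\le C\log D$; (iii) $\tilde Q_K=Q^{(j)}$ and $V_K=L_j$. Moreover the length satisfies $K\le C(\log D)^2$.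
   Context: Forms $[a,2b,c]$ mean $ax_1^2+2bx_1x_2+cx_2^2$ with matrix $\begin{pmatrix} a&b\\ b&c\end{pmatrix}$, determinant $b^2-ac$. Reduced form of determinant $D$: $0<b<\sqrt D$, $\sqrt D-b<|a|<\sqrt D+b$. $\tilde I=[1,2\lambda,\lambda^2-D]$ with $\lambda=\lfloor\sqrt D\rfloor$. The right neighbor of a reduced $Q_1=[a_1,2b_1,c_1]$ is $S^tQ_1S$ with $S=\begin{pmatrix}0&1\\-1&\mu\end{pmatrix}$, $\mu$ the integer with $-\sqrt D-b_1<\mu c_1<-\sqrt D-b_1+|c_1|$. Principal cycle: $Q^{(0)}=\tilde I$, $Q^{(j)}$ the right neighbor of $Q^{(j-1)}$, $S^{(j)}$ the corresponding matrix, $L_j=S^{(1)}\cdots S^{(j)}$; $2p$ is the least positive period of $(Q^{(j)})$. $B_0=\begin{pmatrix}1&0&0&D-\lambda^2\\0&1&1&2\lambda\end{pmatrix}$. Composition $Q_3=Q_1\circ Q_2$ via a $2\times4$ integer matrix $B$: $(x^tQ_1x)(y^tQ_2y)=z^tB^tQ_3Bz$ identically with $z=(x_1y_1,x_1y_2,x_2y_1,x_2y_2)^t$, $B$ unimodular (six $2\times2$ minors $\Delta_{ik}$, columns $i<k$, with gcd 1) and oriented ($a_1\Delta_{12}>0$, $a_2\Delta_{13}>0$, $a_i$ the leading coefficient of $Q_i$). $\otimes$ is the Kronecker product; $\|M\|$ is the maximal absolute value of the entries. Logarithms: $\log x=\log_2|x|$ if $|x|\ge4$, and $\log x=2$ if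 $|x|<4$. *)

(* Defs.v *)
From Stdlib Require Import Reals.
From mathcomp Require Import all_boot all_algebra.

Set Implicit Arguments.
Unset Strict Implicit.
Unset Printing Implicit Defensive.
Import GRing.Theory Num.Theory.
Local Open Scope ring_scope.

Definition int2R (z : int) : R :=
  match z with Posz n => INR n | Negz n => Ropp (INR n.+1) end.

Definition mx2 (a b c d : int) : 'M[int]_2 :=
  \matrix_(i < 2, j < 2)
    if val i == 0%N then (if val j == 0%N then a else b)
    else (if val j == 0%N then c else d).

(* a form [a,2b,c] is its symmetric matrix ((a b) (b c)) *)
Definition fa (Q : 'M[int]_2) : int := Q ord0 ord0.
Definition fb (Q : 'M[int]_2) : int := Q ord0 ord_max.
Definition fc (Q : 'M[int]_2) : int := Q ord_max ord_max.
Definition is_form (Q : 'M[int]_2) : Prop := Q ord0 ord_max = Q ord_max ord0.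

Definition fdet (Q : 'M[int]_2) : int := fb Q ^+ 2 - fa Q * fc Q.

Definition sqrtD (D : nat) : R := sqrt (INR D).

Definition reduced (D : nat) (Q : 'M[int]_2) : Prop :=
  is_form Q /\
  Rlt R0 (int2R (fb Q)) /\ Rlt (int2R (fb Q)) (sqrtD D) /\
  Rlt (Rminus (sqrtD D) (int2R (fb Q))) (Rabs (int2R (fa Q))) /\
  Rlt (Rabs (int2R (fa Q))) (Rplus (sqrtD D) (int2R (fb Q))).

Definition reduced_det (D : nat) (Q : 'M[int]_2) : Prop :=
  reduced D Q /\ fdet Q = (D%:Z).

Definition nbr_mat (mu : int) : 'M[int]_2 := mx2 0 1 (-1) mu.

Definition right_nbr (D : nat) (Q1 S Q2 : 'M[int]_2) : Prop :=
  exists mu : int,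
    S = nbr_mat mu /\
    Rlt (Rminus (Ropp (sqrtD D)) (int2R (fb Q1))) (int2R (mu * fc Q1)) /\
    Rlt (int2R (mu * fc Q1))
        (Rplus (Rminus (Ropp (sqrtD D)) (int2R (fb Q1))) (Rabs (int2R (fc Q1)))) /\
    Q2 = S^T *m Q1 *m S.

Definition lam (D : nat) : nat := Nat.sqrt D.

Definition Itilde (D : nat) : 'M[int]_2 :=
  mx2 1 (lam D)%:Z (lam D)%:Z ((lam D)%:Z ^+ 2 - D%:Z).

(* (Qs j) = Q^(j), (Ss j) = S^(j) (j >= 1) *)
Definition principal_cycle (D : nat) (Qs Ss : nat -> 'M[int]_2) : Prop :=
  Qs 0%N = Itilde D /\ forall j : nat, right_nbr D (Qs j) (Ss j.+1) (Qs j.+1).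

Definition least_period (Qs : nat -> 'M[int]_2) (q : nat) : Prop :=
  (0 < q)%N /\ (forall n : nat, Qs (n + q)%N = Qs n) /\
  forall q' : nat, (0 < q')%N -> (q' < q)%N ->
    ~ (forall n : nat, Qs (n + q')%N = Qs n).

Fixpoint Lmat (Ss : nat -> 'M[int]_2) (j : nat) : 'M[int]_2 :=
  match j with 0%N => 1%:M | j'.+1 => Lmat Ss j' *m Ss j'.+1 end.

Definition B0 (D : nat) : 'M[int]_(2, 4) :=
  \matrix_(i < 2, j < 4)
    nth 0 (if val i == 0%N then [:: 1; 0; 0; D%:Z - (lam D)%:Z ^+ 2]
           else [:: 0; 1; 1; 2 * (lam D)%:Z]) j.

(* Kronecker product, index (i,k) of 'I_2 x 'I_2 <-> 2 i + k of 'I_4 *)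
Definition kron (A B : 'M[int]_2) : 'M[int]_4 :=
  \matrix_(r0 < 4, s0 < 4)
    (A (inord (r0 %/ 2)%N) (inord (s0 %/ 2)%N) * B (inord (r0 %% 2)%N) (inord (s0 %% 2)%N)).

Definition qf (Q : 'M[int]_2) (x : 'cV[int]_2) : int := (x^T *m Q *m x) ord0 ord0.

Definition zvec (x y : 'cV[int]_2) : 'cV[int]_4 :=
  \col_(r0 < 4) (x (inord (r0 %/ 2)%N) ord0 * y (inord (r0 %% 2)%N) ord0).

(* minor Delta_{ik} of the columns i, k (0-indexed here) *)
Definition minor (B : 'M[int]_(2, 4)) (i k : nat) : int :=
  B ord0 (inord i) * B ord_max (inord k) - B ord0 (inord k) * B ord_max (inord i).

Definition unimodular (B : 'M[int]_(2, 4)) : Prop :=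
  foldr gcdz 0 [:: minor B 0 1; minor B 0 2; minor B 0 3;
                   minor B 1 2; minor B 1 3; minor B 2 3] = 1.

Definition oriented (Q1 Q2 : 'M[int]_2) (B : 'M[int]_(2, 4)) : Prop :=
  0 < fa Q1 * minor B 0 1 /\ 0 < fa Q2 * minor B 0 2.

Definition composition (Q1 Q2 Q3 : 'M[int]_2) (B : 'M[int]_(2, 4)) : Prop :=
  (forall x y : 'cV[int]_2, qf Q1 x * qf Q2 y = qf Q3 (B *m zvec x y)) /\
  unimodular B /\ oriented Q1 Q2 B.

Definition normM (m n : nat) (M : 'M[int]_(m, n)) : nat :=
  (\max_(i < m) \max_(j < n) `|M i j|)%N.

Definition plog (x : R) : R :=
  if Rle_dec (INR 4) (Rabs x) then Rdiv (ln (Rabs x)) (ln (INR 2)) else INR 2.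

Definition typeI (D : nat) (Qt V : nat -> 'M[int]_2) (k : nat) : Prop :=
  exists S : 'M[int]_2,
    right_nbr D (Qt k) S (Qt k.+1) /\ V k.+1 = V k *m S /\
    Rle (plog (INR (normM S))) (Rmult (Rinv (INR 2)) (plog (INR D))).

Definition typeII (C : R) (D : nat) (Qt V : nat -> 'M[int]_2) (k : nat) : Prop :=
  exists (k1 k2 : nat) (B : 'M[int]_(2, 4)),
    (k1 <= k)%N /\ (k2 <= k)%N /\
    composition (Qt k1) (Qt k2) (Qt k.+1) B /\
    V k.+1 *m B = B0 D *m kron (V k1) (V k2) /\
    Rle (plog (INR (normM B))) (Rmult C (plog (INR D))).

(* Main.v *)
Require Import Defs.
From Stdlib Require Import Reals Lra Lia Psatz.
From mathcomp Require Import all_boot all_algebra.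
Import GRing.Theory Num.Theory.

Ltac sring := ring.
Ltac sfield := field.

Section RealLemmas.
Local Open Scope R_scope.

Lemma abs_prod_pos x y : Rabs (x*y) = Rabs x * Rabs y.
Proof. apply Rabs_mult. Qed.

Lemma real_core (s l P Q R T a b : R) :
  0 < s -> P*T - Q*R = 1 ->
  a = P*P + 2*l*P*R + (l*l - s*s)*R*R ->
  b = P*Q + l*(P*T + R*Q) + (l*l - s*s)*R*T ->
  0 < b -> b < s -> s - b < Rabs a -> Rabs a < s + b -> 1 <= Rabs a ->
  Rabs (P + R*(l+s)) < Rabs (Q + T*(l+s)) /\
  Rabs (Q + T*(l+s)) < 2*s*Rabs (P + R*(l+s)) /\
  Rabs (Q + T*(l-s)) < Rabs (P + R*(l-s)) /\
  Rabs ((P + R*(l+s)) * (P + R*(l-s))) < 2*s /\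
  1 <= Rabs ((P + R*(l+s)) * (P + R*(l-s))).
Proof.
intros Hs Hdet Ha Hb Hb0 Hbs Ha1 Ha2 Ha3.
assert (E1 : a = (P + R*(l+s))*(P + R*(l-s))) by (subst a; ring).
assert (E2 : b + s = (P + R*(l-s))*(Q + T*(l+s))).
{ subst b. transitivity (P*Q + l*(P*T + R*Q) + (l*l - s*s)*R*T + s*(P*T - Q*R)). rewrite Hdet; ring. ring. }
assert (E3 : b - s = (P + R*(l+s))*(Q + T*(l-s))).
{ subst b. transitivity (P*Q + l*(P*T + R*Q) + (l*l - s*s)*R*T - s*(P*T - Q*R)). rewrite Hdet; ring. ring. }
set (al := P + R*(l+s)) in *. set (alb := P + R*(l-s)) in *.
set (be := Q + T*(l+s)) in *. set (beb := Q + T*(l-s)) in *.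
clearbody al alb be beb.
assert (F1 : Rabs al * Rabs alb = Rabs a) by (rewrite E1 Rabs_mult; auto).
assert (F2 : Rabs alb * Rabs be = b + s).
{ rewrite -Rabs_mult -E2; apply Rabs_right; lra. }
assert (F3 : Rabs al * Rabs beb = s - b).
{ rewrite -Rabs_mult; replace (al*beb) with (-(s-b)) by lra; rewrite Rabs_Ropp; apply Rabs_right; lra. }
pose proof (Rabs_pos al). pose proof (Rabs_pos alb). pose proof (Rabs_pos be). pose proof (Rabs_pos beb).
assert (Hal : 0 < Rabs al) by (destruct (Rle_lt_or_eq_dec _ _ H) as [h|h]; [lra| rewrite -h in F1; lra]).
assert (Halb : 0 < Rabs alb) by (destruct (Rle_lt_or_eq_dec _ _ H0) as [h|h]; [lra| rewrite -h in F1; lra]).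
rewrite -E1. repeat split; try lra.
-
  assert (G : Rabs be * Rabs a = (b+s) * Rabs al) by (rewrite -F1 -F2; ring).
  nra.
- assert (G : Rabs be * Rabs a = (b+s) * Rabs al) by (rewrite -F1 -F2; ring).
  nra.
- assert (G : Rabs beb * Rabs a = (s-b) * Rabs alb) by (rewrite -F1 -F3; ring).
  nra.
Qed.

Lemma red_step_real (s a b c m : R) :
  0 < s -> b*b - a*c = s*s -> 0 < b -> b < s -> s - b < Rabs a -> Rabs a < s + b ->
  (m = 0 \/ 1 <= Rabs m) -> -s - b < m*c -> m*c < -s - b + Rabs c ->
  0 < -b - m*c /\ -b - m*c < s /\ s - (-b - m*c) < Rabs c /\ Rabs c < s + (-b - m*c).
Proof.
intros Hs Hd Hb0 Hbs Ha1 Ha2 Hm Hl Hu.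
assert (Hac : Rabs a * Rabs c = s*s - b*b).
{ rewrite -Rabs_mult. replace (a*c) with (-(s*s-b*b)) by lra. rewrite Rabs_Ropp. apply Rabs_right; nra. }
pose proof (Rabs_pos a). pose proof (Rabs_pos c).
assert (Hc : Rabs c < s + b) by nra.
assert (Hmc : m*c < 0) by lra.
assert (Hm0 : 1 <= Rabs m).
{ destruct Hm as [->|]; [lra|auto]. }
assert (Hmc2 : Rabs c <= - (m*c)).
{ have E := Rabs_left (m*c) ltac:(lra). rewrite -E Rabs_mult. nra. }
repeat split; lra.
Qed.

Lemma nbr_unique_real (x c m1 m2 : R) :
  x < m1*c -> m1*c < x + Rabs c -> x < m2*c -> m2*c < x + Rabs c ->
  (m1 - m2 = 0 \/ 1 <= Rabs (m1 - m2)) -> m1 = m2.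
Proof.
intros H1 H2 H3 H4 [H|H]; [lra|].
assert (Habs : Rabs ((m1 - m2)*c) < Rabs c).
{ unfold Rabs at 1. destruct (Rcase_abs ((m1-m2)*c)); lra. }
rewrite Rabs_mult in Habs. pose proof (Rabs_pos c). nra.
Qed.

Lemma le_div_aux (x y k : R) : 0 < y -> x * y <= k -> x <= k / y.
Proof. intros Hy H. apply (Rmult_le_reg_r y); auto. unfold Rdiv. rewrite Rmult_assoc Rinv_l; lra. Qed.

Lemma coord_bound (s Aa Ac g gb alc albc bec bebc : R) :
  1 <= s -> 0 < Aa -> 0 < Ac ->
  Rabs g <= 4*s*s*(Aa*Aa) -> Rabs gb * (Aa*Aa) <= 4*s*s ->
  Rabs alc <= Ac -> Rabs bec <= 2*s*Ac ->
  Rabs albc * Ac <= 2*s -> Rabs bebc * Ac <= 2*s ->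
  Aa*Aa <= 2*s*Ac -> Ac <= 4*s*s*(Aa*Aa) ->
  Rabs (gb*bec - g*bebc) <= 48*s*s*s*s*s /\ Rabs (g*albc - gb*alc) <= 48*s*s*s*s*s.
Proof.
intros Hs HA HC Hg Hgb Halc Hbec Halbc Hbebc X1 X2.
pose proof (Rabs_pos g). pose proof (Rabs_pos gb). pose proof (Rabs_pos alc).
pose proof (Rabs_pos albc). pose proof (Rabs_pos bec). pose proof (Rabs_pos bebc).
assert (HA2 : 0 < Aa*Aa) by nra.
assert (T1 : Rabs gb * Rabs bec * (Aa*Aa) <= 32*s*s*s*s*s*(Aa*Aa)).
{ assert (Rabs gb * (Aa*Aa) * Rabs bec <= 4*s*s*(2*s*Ac)).
  { apply Rmult_le_compat; nra. }
  assert (4*s*s*(2*s*Ac) <= 4*s*s*(2*s*(4*s*s*(Aa*Aa)))).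
  { apply Rmult_le_compat_l; [nra|]. apply Rmult_le_compat_l; nra. }
  nra. }
assert (T1' : Rabs gb * Rabs bec <= 32*s*s*s*s*s).
{ apply (Rmult_le_reg_r (Aa*Aa)); auto. }
assert (T2 : Rabs g * Rabs bebc * Ac <= 16*s*s*s*s*Ac).
{ assert (Rabs g * (Rabs bebc * Ac) <= 4*s*s*(Aa*Aa)*(2*s)).
  { apply Rmult_le_compat; nra. }
  assert (4*s*s*(Aa*Aa)*(2*s) <= 4*s*s*(2*s*Ac)*(2*s)).
  { apply Rmult_le_compat_r; [nra|]. apply Rmult_le_compat_l; nra. }
  nra. }
assert (T2' : Rabs g * Rabs bebc <= 16*s*s*s*s).
{ apply (Rmult_le_reg_r Ac); auto. }
assert (T3 : Rabs g * Rabs albc * Ac <= 16*s*s*s*s*Ac).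
{ assert (Rabs g * (Rabs albc * Ac) <= 4*s*s*(Aa*Aa)*(2*s)).
  { apply Rmult_le_compat; nra. }
  assert (4*s*s*(Aa*Aa)*(2*s) <= 4*s*s*(2*s*Ac)*(2*s)).
  { apply Rmult_le_compat_r; [nra|]. apply Rmult_le_compat_l; nra. }
  nra. }
assert (T3' : Rabs g * Rabs albc <= 16*s*s*s*s).
{ apply (Rmult_le_reg_r Ac); auto. }
assert (T4 : Rabs gb * Rabs alc * (Aa*Aa) <= 16*s*s*s*s*(Aa*Aa)).
{ assert (Rabs gb * (Aa*Aa) * Rabs alc <= 4*s*s*(4*s*s*(Aa*Aa))).
  { apply Rmult_le_compat; nra. }
  nra. }
assert (T4' : Rabs gb * Rabs alc <= 16*s*s*s*s).
{ apply (Rmult_le_reg_r (Aa*Aa)); auto. }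
assert (s4 : s*s*s*s <= s*s*s*s*s).
{ assert (0 <= s*s*s*s) by (repeat apply Rmult_le_pos; lra). nra. }
split.
- unfold Rminus. eapply Rle_trans; [apply Rabs_triang|]. rewrite Rabs_Ropp !Rabs_mult. nra.
- unfold Rminus. eapply Rle_trans; [apply Rabs_triang|]. rewrite Rabs_Ropp !Rabs_mult. nra.
Qed.

End RealLemmas.

From mathcomp Require Import zify ring ssrZ.
Local Open Scope ring_scope.

Lemma int2R_Z z : int2R z = IZR (Z_of_int z).
Proof.
case: z => n; rewrite /int2R INR_IZR_INZ ?opp_IZR; rewrite /Z_of_int; repeat f_equal; lia.
Qed.
Lemma int2RD x y : int2R (x + y) = Rplus (int2R x) (int2R y).
Proof. rewrite !int2R_Z -plus_IZR; f_equal; lia. Qed.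
Lemma int2RM x y : int2R (x * y) = Rmult (int2R x) (int2R y).
Proof. rewrite !int2R_Z -mult_IZR; f_equal; lia. Qed.
Lemma int2RN x : int2R (- x) = Ropp (int2R x).
Proof. rewrite !int2R_Z -opp_IZR; f_equal; lia. Qed.
Lemma int2RB x y : int2R (x - y) = Rminus (int2R x) (int2R y).
Proof. rewrite !int2R_Z -minus_IZR; f_equal; lia. Qed.
Lemma int2R_lt x y : (x < y) <-> Rlt (int2R x) (int2R y).
Proof. rewrite !int2R_Z; split => H. apply IZR_lt; lia. apply lt_IZR in H; lia. Qed.
Lemma int2R_le x y : (x <= y) <-> Rle (int2R x) (int2R y).
Proof. rewrite !int2R_Z; split => H. apply IZR_le; lia. apply le_IZR in H; lia. Qed.
Lemma int2R_eq x y : int2R x = int2R y -> x = y.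
Proof. rewrite !int2R_Z => H; apply eq_IZR in H; lia. Qed.
Lemma int2R_nat n : int2R n%:Z = INR n.
Proof. by []. Qed.
Lemma int2R0 : int2R 0 = R0. Proof. by []. Qed.
Lemma int2R1 : int2R 1 = R1. Proof. by []. Qed.

Lemma ord2P (i : 'I_2) : i = ord0 \/ i = ord_max.
Proof. case: i => [[|[|k]] Hk]; [left|right|by []]; by apply: val_inj. Qed.

Lemma inord0_2 : (inord 0 : 'I_2) = ord0. Proof. by apply: val_inj; rewrite /= inordK. Qed.
Lemma inord1_2 : (inord 1 : 'I_2) = ord_max. Proof. by apply: val_inj; rewrite /= inordK. Qed.

Lemma sum2 (F : 'I_2 -> int) : \sum_(i < 2) F i = F ord0 + F ord_max.
Proof. rewrite big_ord_recl big_ord1; congr (_ + F _); by apply: val_inj. Qed.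

Lemma sum4 (F : 'I_4 -> int) :
  \sum_(i < 4) F i = F (inord 0) + F (inord 1) + F (inord 2) + F (inord 3).
Proof.
rewrite big_ord_recl big_ord_recl big_ord_recl big_ord1 !addrA.
by congr (F _ + F _ + F _ + F _); apply: val_inj; rewrite /= inordK.
Qed.

Lemma mx2_00 a b c d : mx2 a b c d ord0 ord0 = a. Proof. by rewrite mxE. Qed.
Lemma mx2_01 a b c d : mx2 a b c d ord0 ord_max = b. Proof. by rewrite mxE. Qed.
Lemma mx2_10 a b c d : mx2 a b c d ord_max ord0 = c. Proof. by rewrite mxE. Qed.
Lemma mx2_11 a b c d : mx2 a b c d ord_max ord_max = d. Proof. by rewrite mxE. Qed.
Definition mx2E := (mx2_00, mx2_01, mx2_10, mx2_11).

Lemma mx2_eta (M : 'M[int]_2) :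
  M = mx2 (M ord0 ord0) (M ord0 ord_max) (M ord_max ord0) (M ord_max ord_max).
Proof.
apply/matrixP => i j; have [->|->] := ord2P i; have [->|->] := ord2P j; by rewrite mx2E.
Qed.

Lemma mx2_mul a b c d a' b' c' d' :
  mx2 a b c d *m mx2 a' b' c' d' =
  mx2 (a*a'+b*c') (a*b'+b*d') (c*a'+d*c') (c*b'+d*d').
Proof.
apply/matrixP => i j; rewrite !mxE sum2.
have [->|->] := ord2P i; have [->|->] := ord2P j; by rewrite ?mx2E.
Qed.

Lemma mx2_tr a b c d : (mx2 a b c d)^T = mx2 a c b d.
Proof.
apply/matrixP => i j; rewrite !mxE.
have [->|->] := ord2P i; have [->|->] := ord2P j; by rewrite ?mx2E.
Qed.

Lemma mx2_1 : (1%:M : 'M[int]_2) = mx2 1 0 0 1.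
Proof.
apply/matrixP => i j; rewrite !mxE.
have [->|->] := ord2P i; have [->|->] := ord2P j; by rewrite ?mx2E.
Qed.

Lemma mx2_inj a b c d a' b' c' d' :
  mx2 a b c d = mx2 a' b' c' d' -> [/\ a = a', b = b', c = c' & d = d'].
Proof.
move=> H.
have E := fun i j => congr1 (fun M : 'M[int]_2 => M i j) H.
move: (E ord0 ord0) (E ord0 ord_max) (E ord_max ord0) (E ord_max ord_max).
by rewrite /= !mx2E.
Qed.

Definition cv2 (a b : int) : 'cV[int]_2 := \col_(i < 2) (if val i == 0%N then a else b).
Definition cv4 (z0 z1 z2 z3 : int) : 'cV[int]_4 := \col_(i < 4) nth 0 [:: z0; z1; z2; z3] i.

Lemma cv2_0 a b : cv2 a b ord0 ord0 = a. Proof. by rewrite mxE. Qed.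
Lemma cv2_1 a b : cv2 a b ord_max ord0 = b. Proof. by rewrite mxE. Qed.
Lemma cv2_i0 a b : cv2 a b (inord 0) ord0 = a. Proof. by rewrite inord0_2 mxE. Qed.
Lemma cv2_i1 a b : cv2 a b (inord 1) ord0 = b. Proof. by rewrite inord1_2 mxE. Qed.
Definition cv2E := (cv2_0, cv2_1, cv2_i0, cv2_i1).

Lemma ord1P (j : 'I_1) : j = ord0. Proof. by apply: val_inj; case: j => [[|]]. Qed.

Lemma cv2_eta (x : 'cV[int]_2) : x = cv2 (x ord0 ord0) (x ord_max ord0).
Proof.
apply/matrixP => i j; rewrite (ord1P j); have [->|->] := ord2P i; by rewrite cv2E.
Qed.

Lemma ord4P (i : 'I_4) : [\/ i = inord 0, i = inord 1, i = inord 2 | i = inord 3].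
Proof.
case: i => [[|[|[|[|k]]]] Hk]; [constructor 1|constructor 2|constructor 3|constructor 4|by []];
  by apply: val_inj; rewrite /= inordK.
Qed.

Lemma cv4_0 a b c d : cv4 a b c d (inord 0) ord0 = a. Proof. by rewrite mxE inordK. Qed.
Lemma cv4_1 a b c d : cv4 a b c d (inord 1) ord0 = b. Proof. by rewrite mxE inordK. Qed.
Lemma cv4_2 a b c d : cv4 a b c d (inord 2) ord0 = c. Proof. by rewrite mxE inordK. Qed.
Lemma cv4_3 a b c d : cv4 a b c d (inord 3) ord0 = d. Proof. by rewrite mxE inordK. Qed.
Definition cv4E := (cv4_0, cv4_1, cv4_2, cv4_3).

Lemma mx2_mulv a b c d u v : mx2 a b c d *m cv2 u v = cv2 (a*u + b*v) (c*u + d*v).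
Proof.
apply/matrixP => i j; rewrite (ord1P j) !mxE sum2.
have [->|->] := ord2P i; by rewrite ?mx2E ?cv2E.
Qed.

Lemma qf_expl a b c d u v : qf (mx2 a b c d) (cv2 u v) = u*(a*u + b*v) + v*(c*u + d*v).
Proof.
rewrite /qf -mulmxA mx2_mulv !mxE sum2 !mxE /=. done.
Qed.

Lemma zvec_expl u0 u1 v0 v1 :
  zvec (cv2 u0 u1) (cv2 v0 v1) = cv4 (u0*v0) (u0*v1) (u1*v0) (u1*v1).
Proof.
apply/matrixP => i j; rewrite (ord1P j) !mxE.
by case: (ord4P i) => ->; rewrite !inordK //=; rewrite !inordK //=.
Qed.

Lemma mx2_i a b c d :
  [/\ mx2 a b c d (inord 0) (inord 0) = a, mx2 a b c d (inord 0) (inord 1) = b,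
      mx2 a b c d (inord 1) (inord 0) = c & mx2 a b c d (inord 1) (inord 1) = d].
Proof. by rewrite inord0_2 inord1_2 !mx2E. Qed.

Ltac simp_ord := repeat (rewrite !inordK //=); rewrite ?inord0_2 ?inord1_2 ?mx2E ?cv2E ?cv4E.

Lemma cv4_eq a b c d a' b' c' d' :
  a = a' -> b = b' -> c = c' -> d = d' -> cv4 a b c d = cv4 a' b' c' d'.
Proof. by move=> -> -> -> ->. Qed.

Lemma B0_mulv D z0 z1 z2 z3 :
  B0 D *m cv4 z0 z1 z2 z3 =
  cv2 (z0 + (D%:Z - (lam D)%:Z ^+ 2) * z3) (z1 + z2 + 2 * (lam D)%:Z * z3).
Proof.
apply/matrixP => i j; rewrite (ord1P j) !mxE sum4 !mxE.
have [->|->] := ord2P i; simp_ord; ring.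
Qed.

Lemma kron_zvec (A B : 'M[int]_2) (x y : 'cV[int]_2) :
  kron A B *m zvec x y = zvec (A *m x) (B *m y).
Proof.
rewrite (mx2_eta A) (mx2_eta B) (cv2_eta x) (cv2_eta y) !mx2_mulv !zvec_expl.
apply/matrixP => i j; rewrite (ord1P j) !mxE sum4 !mxE.
case: (ord4P i) => ->; simp_ord; ring.
Qed.

Definition det2 (L : 'M[int]_2) : int :=
  L ord0 ord0 * L ord_max ord_max - L ord0 ord_max * L ord_max ord0.
Definition adj2 (L : 'M[int]_2) : 'M[int]_2 :=
  mx2 (L ord_max ord_max) (- L ord0 ord_max) (- L ord_max ord0) (L ord0 ord0).

Lemma det2_mx2 a b c d : det2 (mx2 a b c d) = a * d - b * c.
Proof. by rewrite /det2 !mx2E. Qed.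

Lemma det2_mul A B : det2 (A *m B) = det2 A * det2 B.
Proof. rewrite (mx2_eta A) (mx2_eta B) mx2_mul !det2_mx2; ring. Qed.

Lemma mul_adj2 L : det2 L = 1 -> L *m adj2 L = 1%:M.
Proof.
rewrite mx2_1 (mx2_eta L) /adj2 /det2 !mx2E mx2_mul => H.
congr mx2; rewrite -?H; ring.
Qed.

Lemma adj2_mul L : det2 L = 1 -> adj2 L *m L = 1%:M.
Proof.
rewrite mx2_1 (mx2_eta L) /adj2 /det2 !mx2E mx2_mul => H.
congr mx2; rewrite -?H; ring.
Qed.

Lemma det2_adj2 L : det2 (adj2 L) = det2 L.
Proof. rewrite /adj2 det2_mx2 /det2; ring. Qed.

Lemma det2_1 : det2 1%:M = 1.
Proof. by rewrite mx2_1 det2_mx2 mulr1 mulr0 subr0. Qed.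

Lemma qf_Lmul (L Q : 'M[int]_2) x : qf (L^T *m Q *m L) x = qf Q (L *m x).
Proof. by rewrite /qf trmx_mul !mulmxA. Qed.

Definition Itil_mx2 D : Itilde D = mx2 1 (lam D)%:Z (lam D)%:Z ((lam D)%:Z ^+ 2 - D%:Z) := erefl.

Lemma B0_norm D u v :
  qf (Itilde D) (B0 D *m zvec u v) = qf (Itilde D) u * qf (Itilde D) v.
Proof.
rewrite (cv2_eta u) (cv2_eta v) zvec_expl B0_mulv /Itilde !qf_expl; ring.
Qed.

Lemma minor_mul2 (N : 'M[int]_2) (M : 'M[int]_(2,4)) i k :
  minor (N *m M) i k = det2 N * minor M i k.
Proof. rewrite /minor /det2 !mxE !sum2; ring. Qed.

Definition cbc (K : 'M[int]_4) (j l : nat) : int :=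
  K (inord j) (inord 0) * K (inord l) (inord 1) - K (inord l) (inord 0) * K (inord j) (inord 1).

Lemma cauchy_binet01 (M : 'M[int]_(2,4)) (K : 'M[int]_4) :
  minor (M *m K) 0 1 =
  minor M 0 1 * cbc K 0 1 + minor M 0 2 * cbc K 0 2 + minor M 0 3 * cbc K 0 3 +
  minor M 1 2 * cbc K 1 2 + minor M 1 3 * cbc K 1 3 + minor M 2 3 * cbc K 2 3.
Proof. rewrite /minor /cbc !mxE !sum4; ring. Qed.

Lemma kron_mul A B C E : kron A B *m kron C E = kron (A *m C) (B *m E).
Proof.
rewrite (mx2_eta A) (mx2_eta B) (mx2_eta C) (mx2_eta E) !mx2_mul.
apply/matrixP => i j; rewrite !mxE sum4 !mxE.
case: (ord4P i) => ->; case: (ord4P j) => ->; simp_ord; ring.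
Qed.

Lemma minor01_B0kron D La Lb :
  minor (B0 D *m kron La Lb) 0 1 =
  qf (Itilde D) (cv2 (La ord0 ord0) (La ord_max ord0)) * det2 Lb.
Proof.
rewrite (mx2_eta La) (mx2_eta Lb) /minor !mxE !sum4 !mxE /Itilde qf_expl det2_mx2.
simp_ord; ring.
Qed.

Lemma minor02_B0kron D La Lb :
  minor (B0 D *m kron La Lb) 0 2 =
  qf (Itilde D) (cv2 (Lb ord0 ord0) (Lb ord_max ord0)) * det2 La.
Proof.
rewrite (mx2_eta La) (mx2_eta Lb) /minor !mxE !sum4 !mxE /Itilde qf_expl det2_mx2.
simp_ord; ring.
Qed.

Delimit Scope R_scope with Re.

Lemma int2R2 : int2R 2 = 2%Re. Proof. rewrite /=; sring. Qed.
Lemma int2RX2 x : int2R (x ^+ 2) = (int2R x * int2R x)%Re.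
Proof. by rewrite expr2 int2RM. Qed.

Definition Bmat D (La Lb Lc : 'M[int]_2) : 'M[int]_(2,4) := adj2 Lc *m (B0 D *m kron La Lb).

Lemma Bmat_V D La Lb Lc : det2 Lc = 1 -> Lc *m Bmat D La Lb Lc = B0 D *m kron La Lb.
Proof. by move=> H; rewrite /Bmat mulmxA mul_adj2 // mul1mx. Qed.

Lemma Bmat_comp D La Lb Lc x y : det2 Lc = 1 ->
  qf (La^T *m Itilde D *m La) x * qf (Lb^T *m Itilde D *m Lb) y =
  qf (Lc^T *m Itilde D *m Lc) (Bmat D La Lb Lc *m zvec x y).
Proof.
move=> H; rewrite !qf_Lmul mulmxA Bmat_V // -mulmxA kron_zvec B0_norm //.
Qed.

Lemma fa_qf (M : 'M[int]_2) : fa M = qf M (cv2 1 0).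
Proof. rewrite {2}(mx2_eta M) qf_expl /fa; ring. Qed.

Lemma fa_LQL (L Q : 'M[int]_2) : fa (L^T *m Q *m L) = qf Q (cv2 (L ord0 ord0) (L ord_max ord0)).
Proof. rewrite fa_qf qf_Lmul {1}(mx2_eta L) mx2_mulv; congr qf; congr cv2; ring. Qed.

Lemma gcd_foldr_dvd (l : seq int) x : x \in l -> (foldr gcdz 0 l %| x)%Z.
Proof.
elim: l => [//|y l IH]; rewrite in_cons => /orP [/eqP ->|H] /=.
  exact: dvdz_gcdl.
exact: dvdz_trans (dvdz_gcdr _ _) (IH H).
Qed.

Lemma gcd_foldr_ge0 (l : seq int) : 0 <= foldr gcdz 0 l.
Proof. by case: l => [//|y l] /=. Qed.

Lemma Bmat_unimod D La Lb Lc :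
  det2 La = 1 -> det2 Lb = 1 -> det2 Lc = 1 -> unimodular (Bmat D La Lb Lc).
Proof.
move=> Ha Hb Hc.
set K := kron (adj2 La) (adj2 Lb).
have H1 : minor (Bmat D La Lb Lc *m K) 0 1 = 1.
  rewrite /Bmat -mulmxA -(mulmxA (B0 D)) kron_mul !mul_adj2 // minor_mul2 det2_adj2 Hc mul1r.
  rewrite minor01_B0kron det2_1 mx2_1 !mx2E /Itilde qf_expl; ring.
rewrite cauchy_binet01 in H1.
rewrite /unimodular.
set l := [:: _; _; _; _; _; _].
have Hd : forall x, x \in l -> (foldr gcdz 0 l %| x)%Z by move=> x; apply: gcd_foldr_dvd.
have : (foldr gcdz 0 l %| 1%R)%Z.
  rewrite -H1.
  by repeat apply: rpredD; apply: dvdz_mulr; apply: Hd; rewrite !inE eqxx ?orbT.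
rewrite (dvdz1 (foldr gcdz 0 l)) => /eqP.
have := gcd_foldr_ge0 l.
move: (foldr gcdz 0 l) => g; lia.
Qed.

Lemma Bmat_oriented D La Lc :
  det2 La = 1 -> det2 Lc = 1 -> fa (La^T *m Itilde D *m La) != 0 ->
  oriented (La^T *m Itilde D *m La) (La^T *m Itilde D *m La) (Bmat D La La Lc).
Proof.
move=> Ha Hc Hf; rewrite /oriented /Bmat !minor_mul2 det2_adj2 Hc !mul1r.
rewrite minor01_B0kron minor02_B0kron Ha !mulr1 -fa_LQL.
move: (fa _) Hf => x /eqP Hx; split; nia.
Qed.

Lemma int2R_cases z : z = 0 \/ (1 <= Rabs (int2R z))%Re.
Proof.
rewrite int2R_Z; case: (Z.eq_dec (Z_of_int z) 0) => H; [left; lia|right].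
rewrite Rabs_Zabs; apply: IZR_le; lia.
Qed.

Lemma int2R_abs_nat z n : (Rabs (int2R z) <= INR n)%Re -> (`|z|%N <= n)%N.
Proof.
rewrite int2R_Z Rabs_Zabs INR_IZR_INZ => /le_IZR H.
lia.
Qed.

Definition sD D := sqrtD D.
Lemma sD_sq D : (sqrtD D * sqrtD D)%Re = INR D.
Proof. rewrite /sqrtD sqrt_sqrt //; apply: pos_INR. Qed.
Lemma sD_pos D : (0 < D)%N -> (0 < sqrtD D)%Re.
Proof. move=> H; apply: sqrt_lt_R0; apply: lt_0_INR; apply/ltP. done. Qed.

Lemma lam_facts D : (0 < D)%N -> ~ (exists n : nat, D = (n * n)%N) ->
  (1 <= lam D)%N /\ (lam D * lam D < D)%N /\ (D < (lam D).+1 * (lam D).+1)%N.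
Proof.
move=> HD Hns; have [H1 H2] := Nat.sqrt_spec D (Nat.le_0_l _).
rewrite /lam; set l := Nat.sqrt D in H1 H2 *.
have Hne : l * l <> D by move=> E; apply: Hns; exists l.
split; [|split]; lia.
Qed.

Lemma lamR_facts D : (0 < D)%N -> ~ (exists n : nat, D = (n * n)%N) ->
  (1 <= INR (lam D))%Re /\ (INR (lam D) < sqrtD D)%Re /\ (sqrtD D < INR (lam D) + 1)%Re.
Proof.
move=> HD Hns; have [h1 [h2 h3]] := lam_facts D HD Hns.
have s2 := sD_sq D; have s0 := sD_pos D HD.
have l1 : (1 <= INR (lam D))%Re by apply: (le_INR 1); apply/leP.
have l2 : (INR (lam D) * INR (lam D) < INR D)%Re by rewrite -mult_INR; apply: lt_INR; apply/ltP.
have l3 : (INR D < (INR (lam D) + 1) * (INR (lam D) + 1))%Re.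
  rewrite -S_INR -mult_INR; apply: lt_INR; apply/ltP. done.
split; [done|split]; nra.
Qed.

Lemma int2R_casesR z : (int2R z = 0 \/ 1 <= Rabs (int2R z))%Re.
Proof. case: (int2R_cases z) => [->|]; [left|right] => //. Qed.

Lemma form_eta (Q : 'M[int]_2) : is_form Q -> Q = mx2 (fa Q) (fb Q) (fb Q) (fc Q).
Proof. rewrite /is_form /fa /fb /fc => H; rewrite {1}(mx2_eta Q) H. done. Qed.

Lemma Itilde_red D : (0 < D)%N -> ~ (exists n : nat, D = (n * n)%N) -> reduced_det D (Itilde D).
Proof.
move=> HD Hns; have [l1 [l2 l3]] := lamR_facts D HD Hns.
rewrite /reduced_det /reduced /fdet /is_form /fa /fb /fc /Itilde !mx2E.
split; [split; [done|]|].
  rewrite /= Rabs_R1. split; [lra|split; [lra|split; lra]].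
ring.
Qed.

Lemma red_step D Q1 S Q2 : (0 < D)%N ->
  reduced_det D Q1 -> right_nbr D Q1 S Q2 -> reduced_det D Q2.
Proof.
move=> HD [[Hf [Hb0 [Hbs [Ha1 Ha2]]]] Hdet] [mu [HS [Hl [Hu HQ2]]]].
set a := fa Q1 in Ha1 Ha2 Hdet *; set b := fb Q1 in Hb0 Hbs Ha1 Ha2 Hdet Hl Hu *.
set c := fc Q1 in Hdet Hl Hu *.
have E : Q2 = mx2 c (- b - mu * c) (- b - mu * c) (a + (mu + mu) * b + mu * mu * c).
  rewrite HQ2 HS /nbr_mat mx2_tr (form_eta _ Hf) !mx2_mul; congr mx2; rewrite /a /b /c; ring.
have s2 := sD_sq D; have s0 := sD_pos D HD.
have Hdr : (int2R b * int2R b - int2R a * int2R c = sqrtD D * sqrtD D)%Re.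
  rewrite s2 -int2R_nat -Hdet /fdet -/a -/b -/c int2RB expr2 !int2RM //.
rewrite int2RM in Hl Hu.
have := red_step_real _ _ _ _ _ s0 Hdr Hb0 Hbs Ha1 Ha2 (int2R_casesR mu) Hl Hu.
move=> [h1 [h2 [h3 h4]]].
rewrite E /reduced_det /reduced /fdet /is_form /fa /fb /fc !mx2E.
have -> : int2R (- b - mu * c) = (- int2R b - int2R mu * int2R c)%Re by rewrite int2RB int2RN int2RM.
split; [split; [done|]|]; first by repeat split; assumption.
rewrite -Hdet /fdet -/a -/b -/c; ring.
Qed.

Lemma det2_nbr mu : det2 (nbr_mat mu) = 1.
Proof. rewrite /nbr_mat det2_mx2; ring. Qed.

Lemma cyc_L D Qs Ss : principal_cycle D Qs Ss -> forall n,
  Qs n = (Lmat Ss n)^T *m Itilde D *m Lmat Ss n /\ det2 (Lmat Ss n) = 1.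
Proof.
move=> [H0 Hs]; elim => [|n [IH1 IH2]] /=.
  by rewrite trmx1 mul1mx mulmx1 H0 det2_1.
case: (Hs n) => mu [HS [_ [_ HQ]]].
rewrite HQ IH1 HS trmx_mul det2_mul IH2 det2_nbr mulr1 !mulmxA; split => //.
Qed.

Lemma cyc_red D Qs Ss : (0 < D)%N -> ~ (exists n : nat, D = (n * n)%N) ->
  principal_cycle D Qs Ss -> forall n, reduced_det D (Qs n).
Proof.
move=> HD Hns [H0 Hs]; elim => [|n IH]; first by rewrite H0; apply: Itilde_red.
exact: red_step HD IH (Hs n).
Qed.

Lemma Lmat_succ D Qs Ss : principal_cycle D Qs Ss -> forall n,
  Lmat Ss n.+1 ord0 ord0 = - Lmat Ss n ord0 ord_max /\
  Lmat Ss n.+1 ord_max ord0 = - Lmat Ss n ord_max ord_max.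
Proof.
move=> [_ Hs] n; case: (Hs n) => mu [HS _] /=.
rewrite HS /nbr_mat (mx2_eta (Lmat Ss n)) mx2_mul !mx2E; split; ring.
Qed.

Definition eR D (x y : int) : R := (int2R x + int2R y * (INR (lam D) + sqrtD D))%Re.
Definition ebR D (x y : int) : R := (int2R x + int2R y * (INR (lam D) - sqrtD D))%Re.
Definition alR D (L : 'M[int]_2) := eR D (L ord0 ord0) (L ord_max ord0).
Definition albR D (L : 'M[int]_2) := ebR D (L ord0 ord0) (L ord_max ord0).
Definition beR D (L : 'M[int]_2) := eR D (L ord0 ord_max) (L ord_max ord_max).
Definition bebR D (L : 'M[int]_2) := ebR D (L ord0 ord_max) (L ord_max ord_max).

Ltac push_int2R := repeat (rewrite int2RB || rewrite int2RD || rewrite int2RM || rewrite int2RN || rewrite int2RX2); rewrite ?int2R_nat /= ?mult_INR.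

Lemma L_facts D L : (0 < D)%N -> det2 L = 1 -> reduced_det D (L^T *m Itilde D *m L) ->
  (Rabs (alR D L) < Rabs (beR D L) /\ Rabs (beR D L) < 2 * sqrtD D * Rabs (alR D L) /\
   Rabs (bebR D L) < Rabs (albR D L) /\ Rabs (alR D L * albR D L) < 2 * sqrtD D /\
   1 <= Rabs (alR D L * albR D L))%Re.
Proof.
move=> HD Hdet [[_ [Hb0 [Hbs [Ha1 Ha2]]]] _].
have s2 := sD_sq D; have s0 := sD_pos D HD.
set M := L^T *m Itilde D *m L in Hb0 Hbs Ha1 Ha2.
have Ea : fa M = L ord0 ord0 * L ord0 ord0 + (lam D)%:Z * L ord0 ord0 * L ord_max ord0
   + (lam D)%:Z * L ord0 ord0 * L ord_max ord0 + ((lam D)%:Z * (lam D)%:Z - D%:Z) * L ord_max ord0 * L ord_max ord0.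
  rewrite /M /fa {1 2}(mx2_eta L) /Itilde mx2_tr !mx2_mul !mx2E; ring.
have Eb : fb M = L ord0 ord0 * L ord0 ord_max + (lam D)%:Z * (L ord0 ord0 * L ord_max ord_max + L ord_max ord0 * L ord0 ord_max)
   + ((lam D)%:Z * (lam D)%:Z - D%:Z) * L ord_max ord0 * L ord_max ord_max.
  rewrite /M /fb {1 2}(mx2_eta L) /Itilde mx2_tr !mx2_mul !mx2E; ring.
have Hd : (int2R (L ord0 ord0) * int2R (L ord_max ord_max) - int2R (L ord0 ord_max) * int2R (L ord_max ord0) = 1)%Re.
  by rewrite -int2RM -int2RM -int2RB; move: Hdet; rewrite /det2 => ->.
have Ha' : (int2R (fa M) = int2R (L ord0 ord0) * int2R (L ord0 ord0) + 2 * INR (lam D) * int2R (L ord0 ord0) * int2R (L ord_max ord0)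
   + (INR (lam D) * INR (lam D) - sqrtD D * sqrtD D) * int2R (L ord_max ord0) * int2R (L ord_max ord0))%Re.
  rewrite Ea s2; push_int2R; sring.
have Hb' : (int2R (fb M) = int2R (L ord0 ord0) * int2R (L ord0 ord_max) + INR (lam D) * (int2R (L ord0 ord0) * int2R (L ord_max ord_max) + int2R (L ord_max ord0) * int2R (L ord0 ord_max))
   + (INR (lam D) * INR (lam D) - sqrtD D * sqrtD D) * int2R (L ord_max ord0) * int2R (L ord_max ord_max))%Re.
  rewrite Eb s2; push_int2R; sring.
have Ha3 : (1 <= Rabs (int2R (fa M)))%Re.
  case: (int2R_casesR (fa M)) => // H0; rewrite H0 Rabs_R0 in Ha1; lra.
exact: (real_core _ _ _ _ _ _ _ _ s0 Hd Ha' Hb' Hb0 Hbs Ha1 Ha2 Ha3).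
Qed.

Lemma nbr_det D Q S1 Q2 S2 Q3 : right_nbr D Q S1 Q2 -> right_nbr D Q S2 Q3 -> Q2 = Q3.
Proof.
move=> [m1 [HS1 [H1 [H2 HQ2]]]] [m2 [HS2 [H3 [H4 HQ3]]]].
rewrite int2RM in H1 H2; rewrite int2RM in H3 H4.
have Hc : (int2R m1 - int2R m2 = 0 \/ 1 <= Rabs (int2R m1 - int2R m2))%Re.
  by rewrite -int2RB; apply: int2R_casesR.
have E := nbr_unique_real _ _ _ _ H1 H2 H3 H4 Hc.
have Em : m1 = m2 by apply: int2R_eq.
by rewrite HQ2 HQ3 HS1 HS2 Em.
Qed.

Lemma cyc_shift D Qs Ss u v : principal_cycle D Qs Ss -> Qs u = Qs v ->
  forall n, Qs (u + n)%N = Qs (v + n)%N.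
Proof.
move=> [_ Hs] Huv; elim => [|n IH]; first by rewrite !addn0.
rewrite !addnS; have H1 := Hs (u + n)%N; have H2 := Hs (v + n)%N.
rewrite IH in H1; exact: nbr_det H1 H2.
Qed.

Lemma cyc_distinct D Qs Ss q u v : principal_cycle D Qs Ss -> least_period Qs q ->
  (u < v)%N -> (v < q)%N -> Qs u <> Qs v.
Proof.
move=> Hpc [Hq [Hper Hmin]] Huv Hvq E.
apply: (Hmin (v - u)%N); [lia|lia|] => n.
have Hsh := cyc_shift _ _ _ _ _ Hpc E (n + q - u)%N.
rewrite -(Hper n) -(Hper (n + (v - u))%N).
have e1 : (n + (v - u) + q = v + (n + q - u))%N by lia.
have e2 : (n + q = u + (n + q - u))%N by lia.
by rewrite e1 -Hsh -e2.
Qed.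

Lemma red_bounds D Q : (0 < D)%N -> reduced_det D Q ->
  (- (2 * D)%:Z < fa Q) /\ (fa Q < (2 * D)%:Z) /\ (0 < fb Q) /\ (fb Q < D%:Z) /\ fa Q != 0.
Proof.
move=> HD [[_ [Hb0 [Hbs [Ha1 Ha2]]]] _].
have s2 := sD_sq D; have s0 := sD_pos D HD.
have D1 : (1 <= INR D)%Re by apply: (le_INR 1); apply/leP.
have sD : (sqrtD D <= INR D)%Re by nra.
have Hab : (Rabs (int2R (fa Q)) < INR (2 * D))%Re by rewrite mult_INR /=; lra.
move: Hab; rewrite /Rabs; case: Rcase_abs => Hs Hab.
- have h1 : (int2R (- (2 * D)%:Z) < int2R (fa Q))%Re by rewrite int2RN int2R_nat; lra.
  have h2 : (int2R (fa Q) < int2R (2 * D)%:Z)%Re by rewrite int2R_nat; lra.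
  have h3 : (int2R 0 < int2R (fb Q))%Re by [].
  have h4 : (int2R (fb Q) < int2R D%:Z)%Re by rewrite int2R_nat; lra.
  have h5 : (int2R (fa Q) < int2R 0)%Re by [].
  move/int2R_lt: h1; move/int2R_lt: h2; move/int2R_lt: h3; move/int2R_lt: h4; move/int2R_lt: h5.
  move=> *; repeat split => //; lia.
- have h1 : (int2R (- (2 * D)%:Z) < int2R (fa Q))%Re by rewrite int2RN int2R_nat; lra.
  have h2 : (int2R (fa Q) < int2R (2 * D)%:Z)%Re by rewrite int2R_nat; lra.
  have h3 : (int2R 0 < int2R (fb Q))%Re by [].
  have h4 : (int2R (fb Q) < int2R D%:Z)%Re by rewrite int2R_nat; lra.
  have h5 : (int2R 0 < int2R (fa Q))%Re by rewrite Rabs_right in Ha1; rewrite /=; lra.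
  move/int2R_lt: h1; move/int2R_lt: h2; move/int2R_lt: h3; move/int2R_lt: h4; move/int2R_lt: h5.
  move=> *; repeat split => //; lia.
Qed.

Lemma form_det_eq D Q Q' : reduced_det D Q -> reduced_det D Q' -> fa Q != 0 ->
  fa Q = fa Q' -> fb Q = fb Q' -> Q = Q'.
Proof.
move=> [[Hf _] Hd] [[Hf' _] Hd'] Ha Ea Eb.
rewrite (form_eta _ Hf) (form_eta _ Hf'); congr mx2 => //.
apply: (mulfI Ha).
move: Hd Hd'; rewrite /fdet => Hd Hd'.
have h : fa Q * fc Q = fb Q ^+ 2 - D%:Z by rewrite -Hd; ring.
have h' : fa Q' * fc Q' = fb Q' ^+ 2 - D%:Z by rewrite -Hd'; ring.
by rewrite h Ea h' Eb.
Qed.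

Lemma period_bound D Qs Ss p : (0 < D)%N -> ~ (exists n : nat, D = (n * n)%N) ->
  principal_cycle D Qs Ss -> least_period Qs (2 * p)%N ->
  (2 * p <= (4 * D).+1 * D.+1)%N.
Proof.
move=> HD Hns Hpc Hlp.
have Hred := cyc_red D Qs Ss HD Hns Hpc.
pose f (i : 'I_(2 * p)) : 'I_((4 * D).+1) * 'I_(D.+1) :=
  (inord (absz (fa (Qs i) + (2 * D)%:Z)), inord (absz (fb (Qs i)))).
have finj : injective f.
  move=> i j /(congr1 (fun x => (val x.1, val x.2))) /=.
  have [a1 [a2 [b1 [b2 a3]]]] := red_bounds D (Qs i) HD (Hred i).
  have [a1' [a2' [b1' [b2' a3']]]] := red_bounds D (Qs j) HD (Hred j).
  rewrite !inordK; try lia.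
  case=> E1 E2.
  have Ea : fa (Qs i) = fa (Qs j) by lia.
  have Eb : fb (Qs i) = fb (Qs j) by lia.
  have E := form_det_eq D _ _ (Hred i) (Hred j) a3 Ea Eb.
  apply: val_inj => /=; case: (ltngtP i j) => // H.
  - by case: (cyc_distinct D Qs Ss _ i j Hpc Hlp H (ltn_ord j)).
  - by case: (cyc_distinct D Qs Ss _ j i Hpc Hlp H (ltn_ord i)); rewrite E.
have := leq_card f finj.
by rewrite card_prod !card_ord.
Qed.

Fixpoint posf (A : nat -> R) (t : R) (n : nat) : nat :=
  match n with 0 => 0%N | S n' => if Rle_dec (A n) t then n else posf A t n' end.

Section Pos.
Variable A : nat -> R.
Hypothesis Ainc : forall n, (A n < A n.+1)%Re.

Lemma A_mono m n : (m <= n)%N -> (A m <= A n)%Re.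
Proof.
move=> H; rewrite -(subnK H); elim: (n - m)%N => [|k IH]; first by rewrite add0n; lra.
rewrite addSn; have := Ainc (k + m)%N; lra.
Qed.

Lemma posf_le t n : (posf A t n <= n)%N.
Proof. elim: n => [//|n IH] /=; case: Rle_dec => H //; exact: leqW. Qed.

Lemma posf_A t n : (A 0 <= t)%Re -> (A (posf A t n) <= t)%Re.
Proof. move=> H0; elim: n => [//|n IH] /=; by case: Rle_dec. Qed.

Lemma posf_next t n : (posf A t n < n)%N -> (t < A (posf A t n).+1)%Re.
Proof.
elim: n => [//|n IH] /=; case: Rle_dec => H; first by rewrite ltnn.
rewrite ltnS leq_eqVlt => /orP [/eqP E|Hlt]; last exact: IH.
by rewrite E; apply: Rnot_le_lt.
Qed.

Lemma posf_top t n : (A n <= t)%Re -> posf A t n = n.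
Proof. case: n => [//|n] /= H; by case: Rle_dec. Qed.

Lemma posf_zero t n : (t < A 1)%Re -> posf A t n = 0%N.
Proof.
move=> H; elim: n => [//|n IH] /=; case: Rle_dec => // H1.
have := A_mono 1 n.+1 isT; lra.
Qed.
End Pos.

Fixpoint rt (n : nat) (x : R) : R := match n with 0 => x | S n => sqrt (rt n x) end.

Lemma rt_ge1 n x : (1 <= x)%Re -> (1 <= rt n x)%Re.
Proof.
move=> H; elim: n => [//|n IH] /=; rewrite -sqrt_1; apply: sqrt_le_1_alt => //.
Qed.

Lemma rt_le n x : (1 <= x)%Re -> (rt n x <= x)%Re.
Proof.
move=> H; elim: n => [|n IH] /=; first lra.
have h1 := rt_ge1 n x H.
have : (sqrt (rt n x) <= rt n x)%Re.
  have hs := sqrt_sqrt (rt n x) ltac:(lra).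
  have hp := sqrt_pos (rt n x).
  have : (1 <= sqrt (rt n x))%Re by rewrite -sqrt_1; apply: sqrt_le_1_alt.
  nra.
lra.
Qed.

Lemma rt_sq n x : (0 <= x)%Re -> (rt n.+1 x * rt n.+1 x = rt n x)%Re.
Proof.
move=> H; rewrite /= sqrt_sqrt //.
elim: n => [//|n IH] /=; exact: sqrt_pos.
Qed.

Lemma rt_small n x y : (0 <= y)%Re -> (x <= pow y (expn 2 n))%Re -> (rt n x <= y)%Re.
Proof.
elim: n x y => [|n IH] x y Hy Hx /=; first by rewrite expn0 pow_1 in Hx.
have : (rt n x <= y * y)%Re.
  apply: IH; first nra.
  have -> : (pow (y * y) (expn 2 n) = pow y (expn 2 n.+1))%Re.
    by rewrite expnS -multE pow_mult /= Rmult_1_r.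
  done.
move=> H; rewrite -(sqrt_square y) //; apply: sqrt_le_1_alt => //.
Qed.

Lemma ln_le x y : (0 < x)%Re -> (x <= y)%Re -> (ln x <= ln y)%Re.
Proof. move=> H0 H; case: (Rle_lt_or_eq_dec _ _ H) => h; [left; exact: ln_increasing|rewrite h; lra]. Qed.

Lemma div_le_aux (x y k : R) : (0 < y)%Re -> (x <= k * y)%Re -> (x / y <= k)%Re.
Proof.
move=> Hy H; apply: (Rmult_le_reg_r y) => //; rewrite /Rdiv Rmult_assoc Rinv_l; lra.
Qed.

Lemma ln2_pos : (0 < ln (INR 2))%Re.
Proof. rewrite -ln_1; apply: ln_increasing; simpl; lra. Qed.

Lemma ln_pow2 k : (ln (pow 2 k) = INR k * ln (INR 2))%Re.
Proof. rewrite ln_pow; [|lra]. by have -> : (INR 2 = 2)%Re by simpl; lra. Qed.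

Lemma plog_big x : (INR 4 <= Rabs x)%Re -> plog x = (ln (Rabs x) / ln (INR 2))%Re.
Proof. by rewrite /plog; case: Rle_dec. Qed.
Lemma plog_small x : ~ (INR 4 <= Rabs x)%Re -> plog x = INR 2.
Proof. by rewrite /plog; case: Rle_dec. Qed.

Lemma INR2 : INR 2 = 2%Re. Proof. simpl; lra. Qed.
Lemma INR4 : INR 4 = pow 2 2. Proof. simpl; lra. Qed.

Lemma plog_ge2 x : (2 <= plog x)%Re.
Proof.
have h2 := ln2_pos.
case: (Rle_dec (INR 4) (Rabs x)) => H; last by rewrite plog_small // INR2; lra.
rewrite plog_big //.
have : (ln (pow 2 2) <= ln (Rabs x))%Re by apply: ln_le; [apply: pow_lt; lra|rewrite -INR4].
rewrite ln_pow2 INR2 => h.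
apply: le_div_aux => //; lra.
Qed.

Lemma L2_le_plog D : (1 <= D)%N -> (ln (INR D) / ln (INR 2) <= plog (INR D))%Re.
Proof.
move=> HD; have h2 := ln2_pos.
have D1 : (1 <= INR D)%Re by apply: (le_INR 1); apply/leP.
have RD : Rabs (INR D) = INR D by rewrite Rabs_right; lra.
case: (Rle_dec (INR 4) (Rabs (INR D))) => H; first by rewrite plog_big // RD; lra.
rewrite plog_small // INR2.
have : (ln (INR D) <= ln (pow 2 2))%Re by apply: ln_le; [lra|rewrite -INR4; rewrite RD in H; lra].
rewrite ln_pow2 INR2 => h. apply: div_le_aux => //; lra.
Qed.

Lemma natlog_le D : (0 < D)%N -> (INR (Nat.log2 D) <= ln (INR D) / ln (INR 2))%Re.
Proof.
move=> HD; have h2 := ln2_pos.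
have [H1 _] := Nat.log2_spec D ltac:(lia).
have : (ln (pow 2 (Nat.log2 D)) <= ln (INR D))%Re.
  apply: ln_le; first by apply: pow_lt; lra.
  rewrite -INR2 -pow_INR; apply: le_INR. by [].
rewrite ln_pow2 => h. apply: le_div_aux => //.
Qed.

Lemma plog_N D N : (1 <= D)%N -> (N <= 24 * (D * D))%N ->
  (plog (INR N) <= 7 * plog (INR D))%Re.
Proof.
move=> HD HN; have h2 := ln2_pos; have P2 := plog_ge2 (INR D).
have L := L2_le_plog D HD.
case: (Rle_dec (INR 4) (Rabs (INR N))) => H; last by rewrite plog_small // INR2; lra.
rewrite plog_big //.
have RN : Rabs (INR N) = INR N by rewrite Rabs_right //; apply: Rle_ge; apply: pos_INR.
rewrite RN in H *.
have N0 : (0 < INR N)%Re by rewrite INR4 /= in H; lra.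
have D1 : (1 <= INR D)%Re by apply: (le_INR 1); apply/leP.
have P5 : (0 < pow 2 5)%Re by apply: pow_lt; lra.
have : (ln (INR N) <= ln (pow 2 5) + ln (INR D) + ln (INR D))%Re.
  rewrite -!ln_mult; [|lra|lra|nra|lra].
  apply: ln_le => //.
  have : (INR N <= INR (24 * (D * D)))%Re by apply: le_INR; apply/leP.
  rewrite !mult_INR /=. nra.
rewrite ln_pow2 => h.
have : (ln (INR N) / ln (INR 2) <= 5 + 2 * (ln (INR D) / ln (INR 2)))%Re.
  apply: div_le_aux => //. rewrite Rmult_plus_distr_r.
  have -> : (2 * (ln (INR D) / ln (INR 2)) * ln (INR 2) = 2 * ln (INR D))%Re.
    by sfield; lra.
  have E5 : INR 5 = 5%Re by simpl; lra.
  rewrite E5 in h; lra.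
lra.
Qed.

Lemma K_bound D : (0 < D)%N ->
  (INR (7 + 3 * Nat.log2 D) <= 7 * (plog (INR D) * plog (INR D)))%Re.
Proof.
move=> HD; have P2 := plog_ge2 (INR D).
have L := L2_le_plog D HD; have N := natlog_le D HD.
rewrite plus_INR mult_INR.
have -> : INR 7 = 7%Re by simpl; lra.
have -> : INR 3 = 3%Re by simpl; lra.
nra.
Qed.

Lemma Bmat_col D La Lb Lc x y :
  Bmat D La Lb Lc *m zvec x y = adj2 Lc *m (B0 D *m zvec (La *m x) (Lb *m y)).
Proof. by rewrite /Bmat -!mulmxA kron_zvec. Qed.

Lemma col_sel (M : 'M[int]_(2,4)) i :
  [/\ M i (inord 0) = (M *m zvec (cv2 1 0) (cv2 1 0)) i ord0,
      M i (inord 1) = (M *m zvec (cv2 1 0) (cv2 0 1)) i ord0,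
      M i (inord 2) = (M *m zvec (cv2 0 1) (cv2 1 0)) i ord0 &
      M i (inord 3) = (M *m zvec (cv2 0 1) (cv2 0 1)) i ord0].
Proof. rewrite !zvec_expl !mxE !sum4 !cv4E; split; ring. Qed.

Lemma mulv10 (L : 'M[int]_2) : L *m cv2 1 0 = cv2 (L ord0 ord0) (L ord_max ord0).
Proof. rewrite {1}(mx2_eta L) mx2_mulv; congr cv2; ring. Qed.
Lemma mulv01 (L : 'M[int]_2) : L *m cv2 0 1 = cv2 (L ord0 ord_max) (L ord_max ord_max).
Proof. rewrite {1}(mx2_eta L) mx2_mulv; congr cv2; ring. Qed.

Lemma entry0_id D Lc u0 u1 v0 v1 :
  (int2R ((adj2 Lc *m (B0 D *m zvec (cv2 u0 u1) (cv2 v0 v1))) ord0 ord0) * (2 * sqrtD D) =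
   (ebR D u0 u1 * ebR D v0 v1) * beR D Lc - (eR D u0 u1 * eR D v0 v1) * bebR D Lc)%Re.
Proof.
rewrite zvec_expl B0_mulv /adj2 mx2_mulv cv2E /beR /bebR /ebR /eR.
push_int2R. rewrite -(sD_sq D). sring.
Qed.

Lemma entry1_id D Lc u0 u1 v0 v1 :
  (int2R ((adj2 Lc *m (B0 D *m zvec (cv2 u0 u1) (cv2 v0 v1))) ord_max ord0) * (2 * sqrtD D) =
   (eR D u0 u1 * eR D v0 v1) * albR D Lc - (ebR D u0 u1 * ebR D v0 v1) * alR D Lc)%Re.
Proof.
rewrite zvec_expl B0_mulv /adj2 mx2_mulv cv2E /alR /albR /ebR /eR.
push_int2R. rewrite -(sD_sq D). sring.
Qed.

Lemma s_ge1 D : (0 < D)%N -> (1 <= sqrtD D)%Re.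
Proof.
move=> HD; have s2 := sD_sq D; have s0 := sD_pos D HD.
have D1 : (1 <= INR D)%Re by apply: (le_INR 1); apply/leP.
nra.
Qed.

Lemma entry_bound D Lc s Aa Ac u0 u1 v0 v1 i : (0 < D)%N -> s = sqrtD D ->
  Aa = Rabs (alR D Lc) \/ True -> Ac = Rabs (alR D Lc) ->
  (0 < Aa)%Re -> (0 < Ac)%Re ->
  (Rabs (eR D u0 u1) <= 2*s*Aa)%Re -> (Rabs (ebR D u0 u1) * Aa <= 2*s)%Re ->
  (Rabs (eR D v0 v1) <= 2*s*Aa)%Re -> (Rabs (ebR D v0 v1) * Aa <= 2*s)%Re ->
  (Rabs (beR D Lc) <= 2*s*Ac)%Re -> (Rabs (albR D Lc) * Ac <= 2*s)%Re ->
  (Rabs (bebR D Lc) <= Rabs (albR D Lc))%Re ->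
  (Aa*Aa <= 2*s*Ac)%Re -> (Ac <= 4*s*s*(Aa*Aa))%Re ->
  (`|(adj2 Lc *m (B0 D *m zvec (cv2 u0 u1) (cv2 v0 v1))) i ord0|%N <= 24 * (D * D))%N.
Proof.
move=> HD Hs _ HAc HA HC Hu1 Hu2 Hv1 Hv2 Hb1 Hb2 Hb3 X1 X2.
have s1 := s_ge1 D HD; rewrite -Hs in s1.
have s2 := sD_sq D; rewrite -Hs in s2.
have pu1 := Rabs_pos (eR D u0 u1); have pu2 := Rabs_pos (ebR D u0 u1).
have pv1 := Rabs_pos (eR D v0 v1); have pv2 := Rabs_pos (ebR D v0 v1).
have Hg : (Rabs (eR D u0 u1 * eR D v0 v1) <= 4*s*s*(Aa*Aa))%Re.
  rewrite Rabs_mult.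
  have := Rmult_le_compat _ _ _ _ pu1 pv1 Hu1 Hv1. nra.
have Hgb : (Rabs (ebR D u0 u1 * ebR D v0 v1) * (Aa*Aa) <= 4*s*s)%Re.
  rewrite Rabs_mult.
  have h1 : (0 <= Rabs (ebR D u0 u1) * Aa)%Re by nra.
  have h2 : (0 <= Rabs (ebR D v0 v1) * Aa)%Re by nra.
  have := Rmult_le_compat _ _ _ _ h1 h2 Hu2 Hv2. nra.
have Hal : (Rabs (alR D Lc) <= Ac)%Re by rewrite HAc; lra.
have Hbb : (Rabs (bebR D Lc) * Ac <= 2*s)%Re.
  have := Rabs_pos (bebR D Lc). nra.
have [c1 c2] := coord_bound _ _ _ _ _ _ _ _ _ s1 HA HC Hg Hgb Hal Hb1 Hb2 Hbb X1 X2.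
apply: int2R_abs_nat.
rewrite !mult_INR -s2.
have Hs0 : (0 < 2 * s)%Re by lra.
have key : forall w X, (int2R w * (2 * sqrtD D) = X)%Re -> (Rabs X <= 48*s*s*s*s*s)%Re ->
   (Rabs (int2R w) <= INR 24 * (s * s * (s * s)))%Re.
  move=> w X E HX; rewrite -Hs in E; rewrite -E Rabs_mult (Rabs_right (2*s)) in HX; last lra.
  have -> : INR 24 = 24%Re by simpl; lra.
  have := Rabs_pos (int2R w). nra.
have [->|->] := ord2P i.
- exact: key (entry0_id D Lc u0 u1 v0 v1) c1.
- exact: key (entry1_id D Lc u0 u1 v0 v1) c2.
Qed.

Lemma Bmat_norm D La Lc s Aa Ac : (0 < D)%N -> s = sqrtD D ->
  Aa = Rabs (alR D La) -> Ac = Rabs (alR D Lc) ->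
  (0 < Aa)%Re -> (0 < Ac)%Re ->
  (Rabs (beR D La) <= 2*s*Aa)%Re -> (Rabs (albR D La) * Aa <= 2*s)%Re ->
  (Rabs (bebR D La) <= Rabs (albR D La))%Re ->
  (Rabs (beR D Lc) <= 2*s*Ac)%Re -> (Rabs (albR D Lc) * Ac <= 2*s)%Re ->
  (Rabs (bebR D Lc) <= Rabs (albR D Lc))%Re ->
  (Aa*Aa <= 2*s*Ac)%Re -> (Ac <= 4*s*s*(Aa*Aa))%Re ->
  (normM (Bmat D La La Lc) <= 24 * (D * D))%N.
Proof.
move=> HD Hs HAa HAc HA HC Ha1 Ha2 Ha3 Hc1 Hc2 Hc3 X1 X2.
have s1 := s_ge1 D HD; rewrite -Hs in s1.
have c0e : (Rabs (eR D (La ord0 ord0) (La ord_max ord0)) <= 2*s*Aa)%Re.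
  rewrite -/(alR D La) -HAa; nra.
have c0b : (Rabs (ebR D (La ord0 ord0) (La ord_max ord0)) * Aa <= 2*s)%Re by [].
have c1e : (Rabs (eR D (La ord0 ord_max) (La ord_max ord_max)) <= 2*s*Aa)%Re by [].
have c1b : (Rabs (ebR D (La ord0 ord_max) (La ord_max ord_max)) * Aa <= 2*s)%Re.
  rewrite -/(bebR D La); nra.
have EB := entry_bound D Lc s Aa Ac _ _ _ _ _ HD Hs (or_intror I) HAc HA HC.
rewrite /normM; apply/bigmax_leqP => i _; apply/bigmax_leqP => j _.
have [e0 e1 e2 e3] := col_sel (Bmat D La La Lc) i.
case: (ord4P j) => ->; rewrite ?e0 ?e1 ?e2 ?e3 Bmat_col ?mulv10 ?mulv01;
  apply: EB => //.
Qed.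

Lemma cyc_Lfacts D Qs Ss n : (0 < D)%N -> ~ (exists n : nat, D = (n * n)%N) ->
  principal_cycle D Qs Ss ->
  let L := Lmat Ss n in
  (Rabs (alR D L) < Rabs (beR D L) /\ Rabs (beR D L) < 2 * sqrtD D * Rabs (alR D L) /\
   Rabs (bebR D L) < Rabs (albR D L) /\ Rabs (alR D L * albR D L) < 2 * sqrtD D /\
   1 <= Rabs (alR D L * albR D L))%Re.
Proof.
move=> HD Hns Hpc L.
have [E Hd] := cyc_L D Qs Ss Hpc n.
have Hr := cyc_red D Qs Ss HD Hns Hpc n.
rewrite E in Hr.
exact: L_facts D L HD Hd Hr.
Qed.

Lemma alR_succ D Qs Ss n : principal_cycle D Qs Ss ->
  alR D (Lmat Ss n.+1) = (- beR D (Lmat Ss n))%Re /\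
  albR D (Lmat Ss n.+1) = (- bebR D (Lmat Ss n))%Re.
Proof.
move=> Hpc; have [E1 E2] := Lmat_succ D Qs Ss Hpc n.
rewrite /alR /albR /beR /bebR /eR /ebR E1 E2 !int2RN; split; sring.
Qed.

Lemma alR_0 D Ss : alR D (Lmat Ss 0) = 1%Re.
Proof. rewrite /= /alR /eR mx2_1 !mx2E /=; sring. Qed.

Lemma beR_0 D Ss : beR D (Lmat Ss 0) = (INR (lam D) + sqrtD D)%Re.
Proof. rewrite /= /beR /eR mx2_1 !mx2E /=; sring. Qed.

Lemma nat_bound D k : (0 < D)%N -> (D < 2 ^ k.+1)%N ->
  (D * ((4 * D).+1 * D.+1) <= 2 ^ (7 + 3 * k))%N.
Proof.
move=> HD HE.
have -> : (2 ^ (7 + 3 * k) = 16 * (2 ^ k.+1 * (2 ^ k.+1 * 2 ^ k.+1)))%N.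
  rewrite (_ : 16 = 2 ^ 4)%N // -!expnD; f_equal; lia.
move: (2 ^ k.+1)%N HE => E HE.
have h1 : ((4 * D).+1 * D.+1 <= (4 * E) * E)%N by apply: leq_mul; lia.
have h2 : (D * ((4 * D).+1 * D.+1) <= E * ((4 * E) * E))%N by apply: leq_mul; lia.
apply: leq_trans h2 _.
have -> : (E * (4 * E * E) = 4 * (E * (E * E)))%N by ring.
by apply: leq_mul.
Qed.

Lemma natpowE a b : Nat.pow a b = expn a b.
Proof. elim: b => [//|b IH]; rewrite expnS -IH //. Qed.

Lemma pow2_INR n : (INR n.+1 <= pow 2 n)%Re.
Proof.
elim: n => [|n IH]; first by simpl; lra.
rewrite S_INR -tech_pow_Rmult; have : (1 <= pow 2 n)%Re by apply: pow_R1_Rle; lra.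
lra.
Qed.

Lemma two_s_le D : (0 < D)%N -> (2 * sqrtD D <= pow 2 D)%Re.
Proof.
move=> HD; have s1 := s_ge1 D HD; have s2 := sD_sq D.
have sD : (sqrtD D <= INR D)%Re by nra.
case: D HD s1 s2 sD => [//|D] _ s1 s2 sD.
have := pow2_INR D => h; rewrite -tech_pow_Rmult; lra.
Qed.

Theorem lemma6p4 :
  exists C : R,
  forall (D : nat), (0 < D)%N -> ~ (exists n : nat, D = (n * n)%N) ->
  forall (Qs Ss : nat -> 'M[int]_2) (p : nat),
    principal_cycle D Qs Ss -> least_period Qs (2 * p)%N ->
  forall j : nat, (1 <= j)%N -> (j <= 2 * p)%N ->
  exists (K : nat) (Qt V : nat -> 'M[int]_2),
    (forall k, (k <= K)%N -> reduced_det D (Qt k)) /\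
    Qt 0%N = Itilde D /\ V 0%N = 1%:M /\
    (forall k, (k < K)%N -> typeI D Qt V k \/ typeII C D Qt V k) /\
    Qt K = Qs j /\ V K = Lmat Ss j /\
    Rle (INR K) (Rmult C (Rmult (plog (INR D)) (plog (INR D)))).
Proof.
exists 7%Re.
move=> D HD Hns Qs Ss p Hpc Hlp j Hj1 Hj2.
have s0 := sD_pos D HD; have s1 := s_ge1 D HD; have s2 := sD_sq D.
have [l1 [l2 l3]] := lamR_facts D HD Hns.
pose A := fun n => Rabs (alR D (Lmat Ss n)).
have Fn := fun n => cyc_Lfacts D Qs Ss n HD Hns Hpc.
have Asucc : forall n, A n.+1 = Rabs (beR D (Lmat Ss n)).
  by move=> n; rewrite /A; have [E _] := alR_succ D Qs Ss n Hpc; rewrite E Rabs_Ropp.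
have Ainc : forall n, (A n < A n.+1)%Re.
  by move=> n; rewrite Asucc; have [h _] := Fn n; exact: h.
have Agr : forall n, (A n.+1 < 2 * sqrtD D * A n)%Re.
  by move=> n; rewrite Asucc; have [_ [h _]] := Fn n; exact: h.
have A0 : A 0%N = 1%Re by rewrite /A alR_0 Rabs_R1.
have A1 : A 1%N = (INR (lam D) + sqrtD D)%Re by rewrite Asucc beR_0 Rabs_right; lra.
have Apos : forall n, (0 < A n)%Re.
  by move=> n; have := A_mono A Ainc 0 n isT; lra.
have Apow : forall n, (A n <= pow (2 * sqrtD D) n)%Re.
  elim => [|n IH] /=; first by rewrite A0; lra.
  have := Agr n; have := Apos n; nra.
set T := A j.
have T1 : (1 <= T)%Re by rewrite -A0; apply: A_mono.
set k := Nat.log2 D; set m := (7 + 3 * k)%N.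
have Tb : (T <= pow 2 (expn 2 m))%Re.
  have hp := period_bound D Qs Ss p HD Hns Hpc Hlp.
  have [_ hk] := Nat.log2_spec D ltac:(lia).
  have hk' : (D < expn 2 k.+1)%N by rewrite -natpowE; apply/ltP.
  have hn := nat_bound D k HD hk'.
  have hj : (D * j <= expn 2 m)%N.
    apply: leq_trans hn; apply: leq_mul => //; lia.
  apply: Rle_trans (Apow j) _.
  apply: Rle_trans (_ : pow (pow 2 D) j <= _)%Re.
    apply: pow_incr; split; [lra|exact: two_s_le].
  rewrite -pow_mult; apply: Rle_pow; [lra|]. apply/leP; exact: hj.
pose lv := fun i => rt (m - i) T.
have lv1 : forall i, (1 <= lv i)%Re by move=> i; apply: rt_ge1.
have lvT : forall i, (lv i <= T)%Re by move=> i; apply: rt_le.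
have lvm : lv m = T by rewrite /lv subnn.
have lv0 : (lv 0%N <= 2)%Re by rewrite /lv subn0; apply: rt_small => //; lra.
have lvS : forall i, (i < m)%N -> (lv i * lv i = lv i.+1)%Re.
  by move=> i Hi; rewrite /lv -(subnSK Hi) rt_sq //; lra.
pose pk := fun i => posf A (lv i) j.
have pkA : forall i, (A (pk i) <= lv i)%Re.
  by move=> i; apply: posf_A; rewrite A0; apply: lv1.
have pkB : forall i, (lv i < 2 * sqrtD D * A (pk i))%Re.
  move=> i; case: (ltnP (pk i) j) => h.
    have := posf_next A (lv i) j h; have := Agr (pk i); rewrite /pk; lra.
  have E : pk i = j by apply/eqP; rewrite eqn_leq h posf_le.
  rewrite E -/T; have := lvT i; nra.
have pk0 : pk 0%N = 0%N by apply: (posf_zero A Ainc); rewrite A1; lra.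
have pkm : pk m = j by rewrite /pk lvm; apply: posf_top; rewrite /T; lra.
exists m, (fun i => Qs (pk i)), (fun i => Lmat Ss (pk i)).
split; first by move=> i _; exact: (cyc_red D Qs Ss HD Hns Hpc).
split; first by rewrite /= pk0; case: Hpc.
split; first by rewrite /= pk0.
split; last first.
  split; first by rewrite /= pkm.
  split; first by rewrite /= pkm.
  exact: K_bound.
move=> i Hi; right; rewrite /typeII.
set a := pk i; set c := pk i.+1.
exists i, i, (Bmat D (Lmat Ss a) (Lmat Ss a) (Lmat Ss c)).
have [Ea Da] := cyc_L D Qs Ss Hpc a; have [Ec Dc] := cyc_L D Qs Ss Hpc c.
have [_ [_ [_ [_ Hfa]]]] := red_bounds D (Qs a) HD (cyc_red D Qs Ss HD Hns Hpc a).
split; first done; split; first done.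
split.
  rewrite /= -/a -/c Ea Ec; split; first by move=> x y; apply: Bmat_comp.
  split; first exact: Bmat_unimod.
  by apply: Bmat_oriented => //; rewrite -Ea.
split; first by rewrite /= -/a -/c Bmat_V.
apply: plog_N => //.
have [h1 [h2 [h3 [h4 h5]]]] := Fn a; have [g1 [g2 [g3 [g4 g5]]]] := Fn c.
rewrite Rabs_mult in h4; rewrite Rabs_mult in g4.
have pa := pkA i; have pb := pkB i; have pc := pkA i.+1; have pd := pkB i.+1.
have sq := lvS i Hi.
have Pa := Apos a; have Pc := Apos c.
have lvi := lv1 i.
rewrite -/a -/c in pa pb pc pd.
have X2 : (lv i * lv i < (2 * sqrtD D * A a) * (2 * sqrtD D * A a))%Re.
  apply: Rmult_le_0_lt_compat; lra.
apply: (Bmat_norm D _ _ (sqrtD D) (A a) (A c)) => //; rewrite /A in pa pb pc pd X2 Pa Pc *; nra.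
Qed.
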